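(* In each of the categories $\mathbf{OSp}$, $\mathbf{Norm}$ and $\mathbf{Ban}$, the only finitely presentable object is the zero space $\{0\}$.
   Context: The ground field is $\mathbb{R}$ or $\mathbb{C}$. $\mathbf{OSp}$ is the category of (not necessarily complete) operator spaces with completely contractive linear maps; $\mathbf{Norm}$ (resp. $\mathbf{Ban}$) is the category of normed (resp. Banach) spaces with contractive linear maps. An object $c$ of a category $\mathcal{C}$ is finitely presentable ($\aleph_0$-presentable) if the functor $\mathcal{C}(c,-)$ preserves directed colimits. *)

(* Defs.v *)
From HB Require Import structures.
From mathcomp Require Import all_boot all_order all_algebra.
From mathcomp Require Export complex.
From mathcomp Require Import all_classical all_reals all_analysis.
Set Implicit Arguments. Unset Strict Implicit. Unset Printing Implicit Defensive.
Import Order.TTheory GRing.Theory Num.Theory.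
Local Open Scope ring_scope.

(* Two morphisms are equal iff their underlying functions agree.      *)
Record ccat := CCat {
  cobj : Type;
  ccar : cobj -> Type;
  chom : forall a b : cobj, (ccar a -> ccar b) -> Prop }.

Record directed_poset := DirectedPoset {
  dp_idx :> Type;
  dp_le : dp_idx -> dp_idx -> Prop;
  dp_refl : forall i, dp_le i i;
  dp_trans : forall i j k, dp_le i j -> dp_le j k -> dp_le i k;
  dp_antisym : forall i j, dp_le i j -> dp_le j i -> i = j;
  dp_inhabited : inhabited dp_idx;
  dp_directed : forall i j, exists k, dp_le i k /\ dp_le j k }.

Record ddiag (C : ccat) (P : directed_poset) := DDiag {
  dobj : P -> cobj C;
  dmap : forall i j : P, dp_le i j -> ccar (dobj i) -> ccar (dobj j);
  dmap_hom : forall i j (h : dp_le i j), chom (dmap h);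
  dmap_id : forall i (h : dp_le i i) x, dmap h x = x;
  dmap_comp : forall i j k (hij : dp_le i j) (hjk : dp_le j k) (hik : dp_le i k) x,
      dmap hjk (dmap hij x) = dmap hik x }.

Section Colimits.
Variables (C : ccat) (P : directed_poset) (D : ddiag C P).

Definition is_cocone (L : cobj C) (lam : forall i : P, ccar (dobj D i) -> ccar L) :=
  (forall i, chom (lam i)) /\
  (forall i j (h : dp_le i j) x, lam j (@dmap _ _ D _ _ h x) = lam i x).

Definition is_colimit (L : cobj C) (lam : forall i : P, ccar (dobj D i) -> ccar L) :=
  is_cocone lam /\
  forall (M : cobj C) (mu : forall i : P, ccar (dobj D i) -> ccar M),
    is_cocone mu ->
    exists u : ccar L -> ccar M,
      (chom u /\ forall i x, u (lam i x) = mu i x) /\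
      forall u' : ccar L -> ccar M,
        chom u' -> (forall i x, u' (lam i x) = mu i x) -> forall y, u' y = u y.

Definition homset (c a : cobj C) := {f : ccar c -> ccar a | chom f}.

(* The functor C(c,-) sends the cocone (L, lam) to a colimit cocone in   *)
(* the category of types/sets: the cocone  C(c, D i) -> C(c, L),         *)
(* f |-> lam i o f  satisfies the universal property of the colimit of   *)
(* the diagram  i |-> C(c, D i)  (with maps f |-> dmap h o f).           *)
Definition hom_preserves (c : cobj C) (L : cobj C)
    (lam : forall i : P, ccar (dobj D i) -> ccar L) :=
  forall (S : Type) (g : forall i : P, homset c (dobj D i) -> S),
    (forall i j (h : dp_le i j) (f : homset c (dobj D i)) (f' : homset c (dobj D j)),
        (forall x, sval f' x = @dmap _ _ D _ _ h (sval f x)) -> g j f' = g i f) ->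
    exists u : homset c L -> S,
      (forall i (f : homset c (dobj D i)) (f' : homset c L),
          (forall x, sval f' x = lam i (sval f x)) -> u f' = g i f) /\
      forall u' : homset c L -> S,
        (forall i (f : homset c (dobj D i)) (f' : homset c L),
            (forall x, sval f' x = lam i (sval f x)) -> u' f' = g i f) ->
        forall f, u' f = u f.
End Colimits.

Definition finitely_presentable (C : ccat) (c : cobj C) :=
  forall (P : directed_poset) (D : ddiag C P) (L : cobj C)
         (lam : forall i : P, ccar (dobj D i) -> ccar L),
    is_colimit lam -> hom_preserves c lam.

Definition fp_iff_zero (C : ccat) (is_zero : cobj C -> Prop) :=
  forall c : cobj C, finitely_presentable c <-> is_zero c.

Definition contractive_linear (K : numFieldType) (E F : normedModType K) (f : E -> F) :=
  linear f /\ forall x, `|f x| <= `|x|.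

Definition NormCat (K : numFieldType) : ccat :=
  @CCat (normedModType K) (fun E => E : Type)
        (fun E F (f : E -> F) => contractive_linear f).

Definition BanCat (K : numFieldType) : ccat :=
  @CCat (completeNormedModType K) (fun E => E : Type)
        (fun E F (f : E -> F) => @contractive_linear K E F f).

(* OSp: abstract operator spaces (Ruan's axioms), not necessarily      *)
(* complete, with completely contractive linear maps.                  *)
Section OpSpace.
Variable K : numFieldType.

Definition mx_lscal (V : lmodType K) n m p (a : 'M[K]_(n, m)) (x : 'M[V]_(m, p))
  : 'M[V]_(n, p) := \matrix_(i, j) \sum_k (a i k *: x k j).
Definition mx_rscal (V : lmodType K) n m p (x : 'M[V]_(n, m)) (b : 'M[K]_(m, p))
  : 'M[V]_(n, p) := \matrix_(i, j) \sum_k (b k j *: x i k).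

Definition opnorm_le n m (a : 'M[K]_(n, m)) (c : K) :=
  0 <= c /\
  forall v : 'cV[K]_m,
    \sum_(i < n) `|(a *m v) i 0| ^+ 2 <= c ^+ 2 * \sum_(j < m) `|v j 0| ^+ 2.

Record opspace := OpSpace {
  os_car :> lmodType K;
  os_norm : forall n, 'M[os_car]_(n, n) -> K;
  os_norm_ge0 : forall n (x : 'M[os_car]_(n, n)), 0 <= os_norm x;
  os_norm_eq0 : forall n (x : 'M[os_car]_(n, n)), os_norm x = 0 -> x = 0;
  os_normD : forall n (x y : 'M[os_car]_(n, n)), os_norm (x + y) <= os_norm x + os_norm y;
  os_normZ : forall n (a : K) (x : 'M[os_car]_(n, n)),
      os_norm (map_mx ( *:%R a) x) = `|a| * os_norm x;
  os_R1 : forall m n (x : 'M[os_car]_(m, m)) (y : 'M[os_car]_(n, n)),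
      os_norm (block_mx x 0 0 y) = Num.max (os_norm x) (os_norm y);
  os_R2 : forall m n (a : 'M[K]_(n, m)) (x : 'M[os_car]_(m, m)) (b : 'M[K]_(m, n)) (ca cb : K),
      opnorm_le a ca -> opnorm_le b cb ->
      os_norm (mx_rscal (mx_lscal a x) b) <= ca * os_norm x * cb }.

Definition completely_contractive (E F : opspace) (f : E -> F) :=
  linear f /\ forall n (x : 'M[E]_(n, n)), os_norm (map_mx f x) <= os_norm x.

Definition OSpCat : ccat :=
  @CCat opspace (fun E => os_car E : Type) completely_contractive.
End OpSpace.

Arguments fp_iff_zero : clear implicits.

Definition only_fp_object_is_zero (K : numFieldType) : Prop :=
  fp_iff_zero (OSpCat K) (fun E => forall x : os_car E, x = 0) /\
  fp_iff_zero (NormCat K) (fun E => forall x : E, x = 0) /\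
  fp_iff_zero (BanCat K) (fun E => forall x : E, x = 0).

(* Main.v *)
Require Import Defs.
From HB Require Import structures.
From mathcomp Require Import all_boot all_order all_algebra.
From mathcomp Require Import complex.
From mathcomp Require Import all_classical all_reals all_analysis.
From mathcomp Require Import ring.
Set Implicit Arguments. Unset Strict Implicit. Unset Printing Implicit Defensive.
Import Order.TTheory GRing.Theory Num.Theory.
Local Open Scope ring_scope.

Lemma inf_le (K : numFieldType) (a b : K) : 0 <= b ->
  (forall t, 0 < t -> a <= (1 + t) * b) -> a <= b.
Proof.
move=> b0 H; apply/ler_addgt0Pr => e e0.
have b1 : 0 < b + 1 by rewrite ltr_wpDl.
apply: (le_trans (H (e / (b + 1)) _)); first by rewrite divr_gt0.
rewrite mulrDl mul1r lerD2l mulrAC ler_pdivrMr // ler_pM2l //.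
by rewrite lerDl.
Qed.

Section Zero.
Variables (C : ccat) (c : cobj C) (z : forall a : cobj C, ccar a).
Hypothesis Hz1 : forall a (f : ccar c -> ccar a), chom f -> forall x, f x = z a.
Hypothesis Hz2 : forall a b (f : ccar a -> ccar b), chom f -> f (z a) = z b.
Hypothesis Hz3 : forall a, chom (fun _ : ccar c => z a).

Lemma zero_fp : finitely_presentable c.
Proof.
move=> P D L lam [[lamhom lamcomp] _] S g Hg.
case: (dp_inhabited P) => i0.
pose f0 i : homset c (dobj D i) := exist _ (fun _ => z (dobj D i)) (Hz3 _).
have Hall : forall i f, g i f = g i0 (f0 i0).
  move=> i f; have [k [hik hi0k]] := dp_directed i i0.
  rewrite -(Hg _ _ hik f (f0 k)); last first.
    by move=> x /=; rewrite (Hz1 (svalP f)) (Hz2 (dmap_hom D hik)).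
  rewrite -(Hg _ _ hi0k (f0 i0) (f0 k)) //.
  by move=> x /=; rewrite (Hz2 (dmap_hom D hi0k)).
exists (fun _ => g i0 (f0 i0)); split.
  by move=> i f f' _; rewrite Hall.
move=> u' Hu' f; apply: (Hu' i0 (f0 i0)) => x /=.
by rewrite (Hz1 (svalP f)) (Hz2 (lamhom i0)).
Qed.
End Zero.

Section Pos.
Variable K : numFieldType.
Definition posK := {t : K | 0 < t}.
Definition posle (i j : posK) := sval j <= sval i.

Lemma posle_refl i : posle i i. Proof. exact: lexx. Qed.
Lemma posle_trans i j k : posle i j -> posle j k -> posle i k.
Proof. by move=> a b; apply: le_trans b a. Qed.
Lemma posle_anti i j : posle i j -> posle j i -> i = j.
Proof.
move=> a b; apply: eq_sig_hprop; first by move=> x p q; apply: Prop_irrelevance.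
by apply/eqP; rewrite eq_le; apply/andP; split.
Qed.
Lemma posK_inh : inhabited posK. Proof. exact: inhabits (exist (fun t : K => 0 < t) 1 ltr01). Qed.
Lemma posle_dir i j : exists k, posle i k /\ posle j k.
Proof.
case: i j => [i hi] [j hj].
have hij : 0 < i + j by rewrite addr_gt0.
have hk : 0 < i * j / (i + j) by rewrite divr_gt0 // mulr_gt0.
exists (exist (fun t : K => 0 < t) _ hk); rewrite /posle /=; split.
  by rewrite ler_pdivrMr // ler_pM2l // lerDr ltW.
by rewrite ler_pdivrMr // mulrC ler_pM2l // lerDl ltW.
Qed.

Definition posP : directed_poset :=
  DirectedPoset posle_refl posle_trans posle_anti posK_inh posle_dir.
End Pos.
Section NonFP.
Variables (K : numFieldType) (C : ccat) (c : cobj C) (sc : K -> ccar c -> ccar c).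
Hypothesis sc1 : forall x, sc 1 x = x.
Hypothesis scM : forall r s x, sc r (sc s x) = sc (r * s) x.
Hypothesis schom : forall r, 0 < r -> r <= 1 -> chom (sc r).
Hypothesis scinf : forall (M : cobj C) (f : ccar c -> ccar M),
  (forall t, 0 < t -> exists g : ccar c -> ccar M, chom g /\ forall y, f y = g (sc (1 + t) y)) ->
  chom f.
Hypothesis scbig : forall t (f : ccar c -> ccar c), 0 < t -> chom f ->
  (forall x, f x = sc (1 + t) x) -> False.

Let P := posP K.
Let v (i : P) : K := sval i.
Lemma v_gt0 (i : P) : 0 < v i. Proof. exact: (svalP i). Qed.
Lemma v1_gt0 (i : P) : 0 < 1 + v i. Proof. by rewrite addr_gt0 // v_gt0. Qed.
Lemma v1_neq0 (i : P) : 1 + v i != 0. Proof. by rewrite gt_eqF // v1_gt0. Qed.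

Let dm (i j : P) (h : dp_le i j) : ccar c -> ccar c := sc ((1 + v j) / (1 + v i)).

Lemma dm_hom i j (h : dp_le i j) : chom (dm h).
Proof.
apply: schom; first by rewrite divr_gt0 ?v1_gt0.
by rewrite ler_pdivrMr ?v1_gt0 // mul1r lerD2l.
Qed.
Lemma dm_id i (h : dp_le i i) x : dm h x = x.
Proof. by rewrite /dm divff ?v1_neq0 // sc1. Qed.
Lemma dm_comp i j k (hij : dp_le i j) (hjk : dp_le j k) (hik : dp_le i k) x :
  dm hjk (dm hij x) = dm hik x.
Proof.
rewrite /dm scM; congr (sc _ x).
have := v1_neq0 i; have := v1_neq0 j; move=> a b; field.
by rewrite a b.
Qed.

Let D : ddiag C P := @DDiag C P (fun _ => c) dm dm_hom dm_id dm_comp.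

Let lam (i : P) : ccar c -> ccar c := sc (1 / (1 + v i)).

Lemma lam_hom i : chom (lam i).
Proof.
apply: schom; first by rewrite divr_gt0 ?v1_gt0.
by rewrite ler_pdivrMr ?v1_gt0 // !mul1r lerDl ltW // v_gt0.
Qed.

Lemma sc_inv (i : P) x : sc (1 + v i) (lam i x) = x.
Proof. by rewrite /lam scM mulrC divfK ?v1_neq0 // sc1. Qed.
Lemma sc_inv' (i : P) x : lam i (sc (1 + v i) x) = x.
Proof. by rewrite /lam scM mul1r mulVf ?v1_neq0 // sc1. Qed.

Lemma colim : is_colimit (D := D) (L := c) lam.
Proof.
have cocone : is_cocone (D := D) lam.
  split; first exact: lam_hom.
  move=> i j h x /=; rewrite /lam /dm scM; congr (sc _ x).
  have := v1_neq0 i; have := v1_neq0 j; move=> a b; field.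
  by rewrite a b.
split=> // M mu [muhom mucomp].
have key1 : forall (i k : P) (h : dp_le i k) y,
    mu i (sc (1 + v i) y) = mu k (sc (1 + v k) y).
  move=> i k h y; rewrite -(mucomp i k h) /= /dm scM.
  by rewrite divfK ?v1_neq0.
have key : forall (i j : P) y, mu i (sc (1 + v i) y) = mu j (sc (1 + v j) y).
  move=> i j y; have [k [hik hjk]] := dp_directed i j.
  by rewrite (key1 i k hik) (key1 j k hjk).
pose one : P := exist (fun t : K => 0 < t) 1 ltr01.
exists (fun y => mu one (sc (1 + v one) y)); split.
  split.
    apply: scinf => t ht; exists (mu (exist (fun t : K => 0 < t) t ht)); split.
      exact: muhom.
    by move=> y; rewrite (key one (exist (fun t : K => 0 < t) t ht)).
  by move=> i x; rewrite (key one i) sc_inv.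
move=> u' _ Hu' y.
by rewrite -[in LHS](sc_inv' one y) Hu'.
Qed.

Lemma id_hom : chom (fun x : ccar c => x).
Proof.
apply: scinf => t ht; exists (sc (1 / (1 + t))); split.
  apply: schom; first by rewrite divr_gt0 // addr_gt0.
  by rewrite ler_pdivrMr ?addr_gt0 // !mul1r lerDl ltW.
by move=> y; rewrite scM mul1r mulVf ?sc1 // gt_eqF // addr_gt0.
Qed.

Lemma not_fp : ~ finitely_presentable c.
Proof.
move=> fp; have hp := fp P D c lam colim.
have [u [_ Huniq]] := hp Prop (fun _ _ => True) (fun _ _ _ _ _ _ => erefl).
pose idh : homset c c := exist _ (fun x => x) id_hom.
pose E := fun f' : homset c c =>
  exists i (f : homset c (dobj D i)), forall x, sval f' x = lam i (sval f x).
have h1 := Huniq (fun _ => True) (fun _ _ _ _ => erefl) idh.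
have h2 : E idh = u idh.
  apply: Huniq => i f f' Hf; apply: propext; split=> // _.
  by exists i, f.
have : E idh by rewrite h2 -h1.
case=> i [f Hf].
apply: (scbig (v_gt0 i) (svalP f)) => x.
have hx : x = lam i (sval f x) := Hf x.
by rewrite {2}hx sc_inv.
Qed.
End NonFP.
Section Inst.
Variable K : numFieldType.

Lemma lin_scale (V : lmodType K) (r : K) : linear (fun x : V => r *: x).
Proof. by move=> a u w; rewrite scalerDr !scalerA mulrC. Qed.

Lemma lin_comp (V W : lmodType K) (g : V -> W) (s : K) (f : V -> W) :
  linear g -> (forall y, f y = g (s *: y)) -> linear f.
Proof.
by move=> lg hf a u w; rewrite !hf scalerDr scalerA mulrC -scalerA lg.
Qed.

Lemma lin0 (V W : lmodType K) (f : V -> W) : linear f -> f 0 = 0.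
Proof.
move=> lf; have h := lf (-1) 0 0.
by rewrite scaler0 add0r scaleN1r addNr in h.
Qed.

Lemma lin_const0 (V W : lmodType K) : linear (fun _ : V => (0 : W)).
Proof. by move=> a u w; rewrite scaler0 addr0. Qed.

Lemma big_contra (t n : K) : 0 < t -> 0 < n -> (1 + t) * n <= n -> False.
Proof.
move=> ht hn; rewrite mulrDl mul1r gerDl pmulr_rle0 //.
by move=> /(lt_le_trans hn); rewrite ltxx.
Qed.

Lemma nonzero_ex (V : lmodType K) : ~ (forall x : V, x = 0) -> exists x : V, x <> 0.
Proof. by move=> h; apply/existsNP. Qed.

Section NormS.
Variable c : normedModType K.

Lemma n_schom (r : K) : 0 < r -> r <= 1 -> contractive_linear (fun x : c => r *: x).
Proof.
move=> r0 r1; split; first exact: lin_scale.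
by move=> x; rewrite normrZ ger0_norm ?(ltW r0) // ler_piMl.
Qed.

Lemma n_scinf (M : normedModType K) (f : c -> M) :
  (forall t, 0 < t -> exists g : c -> M, contractive_linear g /\ forall y, f y = g ((1 + t) *: y)) ->
  contractive_linear f.
Proof.
move=> H; have [g [[lg _] hg]] := H 1 ltr01.
split; first exact: lin_comp lg hg.
move=> y; apply: inf_le => // t ht; have [g' [[_ ng'] hg']] := H t ht.
rewrite hg'; apply: le_trans (ng' _) _.
by rewrite normrZ ger0_norm // ltW // addr_gt0.
Qed.

Lemma n_scbig (x0 : c) : x0 <> 0 -> forall t (f : c -> c), 0 < t -> contractive_linear f ->
  (forall x, f x = (1 + t) *: x) -> False.
Proof.
move=> hx0 t f ht [_ nf] hf; have := nf x0.
rewrite hf normrZ ger0_norm ?(ltW (addr_gt0 ltr01 ht)) //.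
apply: big_contra ht _; rewrite normr_gt0; exact/eqP.
Qed.

Lemma n_z1 (hc : forall x : c, x = 0) (M : normedModType K) (f : c -> M) :
  contractive_linear f -> forall x, f x = 0.
Proof. by move=> [lf _] x; rewrite (hc x); exact: lin0. Qed.
End NormS.

Lemma n_z2 (a b : normedModType K) (f : a -> b) : contractive_linear f -> f 0 = 0.
Proof. by move=> [lf _]; exact: lin0. Qed.
Lemma n_z3 (a b : normedModType K) : contractive_linear (fun _ : a => (0 : b)).
Proof. by split; [exact: lin_const0 | move=> x; rewrite normr0]. Qed.

Lemma norm_part : fp_iff_zero (NormCat K) (fun E => forall x : E, x = 0).
Proof.
move=> c; split.
  move=> fp; apply: contrapT => /nonzero_ex [x0 hx0].
  apply: (@not_fp K (NormCat K) c (fun r x => r *: x)) fp.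
  - exact: scale1r.
  - by move=> r s x; rewrite scalerA.
  - exact: n_schom.
  - exact: n_scinf.
  - exact: n_scbig hx0.
move=> hc; apply: (@zero_fp (NormCat K) c (fun a => (0 : a))).
- exact: n_z1.
- exact: n_z2.
- exact: n_z3.
Qed.

Lemma ban_part : fp_iff_zero (BanCat K) (fun E => forall x : E, x = 0).
Proof.
move=> c; split.
  move=> fp; apply: contrapT => /nonzero_ex [x0 hx0].
  apply: (@not_fp K (BanCat K) c (fun r x => r *: x)) fp.
  - exact: scale1r.
  - by move=> r s x; rewrite scalerA.
  - exact: n_schom.
  - move=> M f; exact: n_scinf.
  - exact: n_scbig hx0.
move=> hc; apply: (@zero_fp (BanCat K) c (fun a => (0 : a))).
- move=> a f; exact: n_z1.
- move=> a b f; exact: n_z2.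
- move=> a; exact: n_z3.
Qed.

Lemma o_schom (c : opspace K) (r : K) : 0 < r -> r <= 1 ->
  completely_contractive (fun x : c => r *: x).
Proof.
move=> r0 r1; split; first exact: lin_scale.
move=> n X; change (map_mx (fun x => r *: x) X) with (map_mx ( *:%R r) X).
by rewrite os_normZ ger0_norm ?(ltW r0) // ler_piMl // os_norm_ge0.
Qed.

Lemma o_scinf (c M : opspace K) (f : c -> M) :
  (forall t, 0 < t -> exists g : c -> M, completely_contractive g /\ forall y, f y = g ((1 + t) *: y)) ->
  completely_contractive f.
Proof.
move=> H; have [g [[lg _] hg]] := H 1 ltr01.
split; first exact: lin_comp lg hg.
move=> n X; apply: inf_le; first exact: os_norm_ge0.
move=> t ht; have [g' [[_ ng'] hg']] := H t ht.
have -> : map_mx f X = map_mx g' (map_mx ( *:%R (1 + t)) X).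
  by apply/matrixP => i j; rewrite !mxE hg'.
apply: le_trans (ng' _ _) _.
by rewrite os_normZ ger0_norm // ltW // addr_gt0.
Qed.

Lemma o_scbig (c : opspace K) (x0 : c) : x0 <> 0 -> forall t (f : c -> c), 0 < t ->
  completely_contractive f -> (forall x, f x = (1 + t) *: x) -> False.
Proof.
move=> hx0 t f ht [_ nf] hf.
pose X : 'M[os_car c]_(1, 1) := const_mx x0.
have hX : 0 < os_norm X.
  rewrite lt_def os_norm_ge0 andbT; apply/eqP => /os_norm_eq0 hX0.
  by apply: hx0; move/matrixP: hX0 => /(_ 0 0); rewrite !mxE.
have := nf 1%N X.
have -> : map_mx f X = map_mx ( *:%R (1 + t)) X.
  by apply/matrixP => i j; rewrite !mxE hf.
rewrite os_normZ ger0_norm ?(ltW (addr_gt0 ltr01 ht)) //.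
exact: big_contra ht hX.
Qed.

Lemma osp_part : fp_iff_zero (OSpCat K) (fun E => forall x : os_car E, x = 0).
Proof.
move=> c; split.
  move=> fp; apply: contrapT => /nonzero_ex [x0 hx0].
  apply: (@not_fp K (OSpCat K) c (fun r x => r *: x)) fp.
  - exact: scale1r.
  - by move=> r s x; rewrite scalerA.
  - exact: o_schom.
  - move=> M f; exact: o_scinf.
  - exact: o_scbig hx0.
move=> hc; apply: (@zero_fp (OSpCat K) c (fun a => (0 : os_car a))).
- by move=> a f [lf _] x; rewrite (hc x); exact: lin0.
- by move=> a b f [lf _]; exact: lin0.
- move=> a; split; first exact: lin_const0.
  move=> n X; have -> : map_mx (fun _ : os_car c => (0 : os_car a)) X = map_mx ( *:%R 0) (0 : 'M[os_car a]_n).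
    by apply/matrixP => i j; rewrite !mxE scale0r.
  by rewrite os_normZ normr0 mul0r os_norm_ge0.
Qed.

Lemma main_K : only_fp_object_is_zero K.
Proof. split; [exact: osp_part | split; [exact: norm_part | exact: ban_part]]. Qed.
End Inst.

Theorem proposition1p6 (R : realType) :
  only_fp_object_is_zero R /\ only_fp_object_is_zero R[i].
Proof. by split; apply: main_K. Qed.
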